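(* Let $\mathbb{X}=\{0,1\}^{\mathbb{N}}$ with the metric $d$ and let $\mu$ be the measure on $\mathbb{X}$ defined below from a family $\mathcal{L}$ of cylinders and numbers $0<p_0\le p_1$ with $p_0+p_1=1$. Let $E=\{q=(q_1,q_2)\in\mathbb{R}^2: q_1+q_2\ge0\}$, and let $\chi:\mathbb{X}\times\left]0,1\right]\to(\mathbb{R}^2)'$ satisfy: for every $q=(q_1,q_2)\in\mathbb{R}^2$ and every $\lambda>0$ there is $r_0>0$ such that for all $x\in\mathbb{X}$ and $r<r_0$, $$r^{\lambda}\mu(B(x,r))^{q_1+q_2}\le e^{\langle q,\chi(x,r)\rangle}\le r^{-\lambda}\mu(B(x,r))^{q_1+q_2}.$$ Let $a>0$ and $\alpha\in(\mathbb{R}^2)'$ with $\langle q,\alpha\rangle=a(q_1+q_2)$. Then $$\left\{x\in\mathbb{X}:\limsup_{r\to0}\frac{\langle q,\chi(x,r)\rangle}{\log r}\le\langle q,\alpha\rangle\ \forall q\in E\right\}=\left\{x\in\mathbb{X}:\limsup_{r\to0}\frac{\log\mu(B(x,r))}{\log r}\le a\right\}.$$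
   Context: For $x=(x_i)_{i\ge0},y=(y_i)_{i\ge0}\in\mathbb{X}$, $d(x,y)=0$ if $x=y$ and $d(x,y)=2^{-n}$ if $x_n\ne y_n$ and $x_i=y_i$ for $0\le i<n$. For a finite word $j=j_0\dots j_{n-1}$ over $\{0,1\}$, the cylinder is $[j]=\{jx:x\in\mathbb{X}\}$. $\mathcal{L}$ is a family of cylinders (its elements are called selected cylinders). $\mu$ is the Borel probability measure with $\mu(\mathbb{X})=1$ and, for every cylinder $[j]$ and $l\in\{0,1\}$, $\mu([jl])=p_l\,\mu([j])$ if $[j]$ contains a selected cylinder, and $\mu([jl])=\mu([j])/2$ otherwise. *)

(* Defs.v *)
From HB Require Import structures.
From mathcomp Require Import all_boot all_order all_algebra.
From mathcomp Require Import all_classical all_reals all_analysis.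
Set Implicit Arguments. Unset Strict Implicit. Unset Printing Implicit Defensive.
Import Order.TTheory GRing.Theory Num.Theory.
Local Open Scope classical_set_scope.
Local Open Scope ring_scope.

(* The Cantor space X = {0,1}^N, with 0 = false, 1 = true. *)
Definition X := nat -> bool.

Definition dist (R : realType) (x y : X) : R :=
  match pselect (exists n, x n != y n) with
  | left H => (2%:R ^- (ex_minn H))%R
  | right _ => 0
  end.

Definition ball_d (R : realType) (x : X) (r : R) : set X :=
  [set y | dist R x y < r].

Definition catw (j : seq bool) (x : X) : X :=
  fun n => if (n < size j)%N then nth false j n else x (n - size j)%N.

Definition cyl (j : seq bool) : set X := [set catw j x | x in [set: X]].

Definition d_open (R : realType) : set (set X) :=
  [set A | forall x, A x -> exists2 r : R, 0 < r & ball_d x r `<=` A].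

Definition borelX (R : realType) := g_sigma_algebraType (d_open R).

(* [j] contains a selected cylinder, L being the family of selected cylinders
   (given by their words) *)
Definition contains_selected (L : set (seq bool)) (j : seq bool) : Prop :=
  exists2 k, L k & cyl k `<=` cyl j.

Definition is_mu (R : realType) (L : set (seq bool)) (p0 p1 : R)
  (mu : set (borelX R) -> \bar R) : Prop :=
  mu setT = 1%E /\
  forall (j : seq bool) (l : bool),
    mu (cyl (rcons j l)) =
      ((if pselect (contains_selected L j) then (if l then p1 else p0)
        else 2^-1)%:E * mu (cyl j))%E.

(* pairing <q, v> between R^2 and its dual (identified with R^2) *)
Definition pairing (R : realType) (q v : R * R) : R := q.1 * v.1 + q.2 * v.2.

Definition limsup0 (R : realType) (f : R -> R) : \bar R :=
  ereal_inf [set ereal_sup [set (f r)%:E | r in `]0, delta[ ] | delta in `]0, +oo[ ].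

(* Main.v *)
Set Warnings "-all".
Require Import Defs.
From HB Require Import structures.
From mathcomp Require Import all_boot all_order all_algebra.
From mathcomp Require Import all_classical all_reals all_analysis.
Import Order.TTheory GRing.Theory Num.Theory.
Local Open Scope classical_set_scope.
Local Open Scope ring_scope.

Lemma limsup0_le1 (R : realType) (f : R -> R) (c : R) :
  (limsup0 f <= c%:E)%E -> forall e : R, 0 < e ->
  exists2 d : R, 0 < d & forall r, 0 < r -> r < d -> f r <= c + e.
Proof.
move=> H e e0.
have : (limsup0 f < (c + e)%:E)%E.
  by apply: (le_lt_trans H); rewrite lte_fin ltrDl.
case/ereal_inf_lt => y [d d0 <-] Hy.
exists d.
  by move: d0; rewrite /= in_itv /= andbT.
move=> r r0 rd.
rewrite -lee_fin; apply: ltW; apply: le_lt_trans Hy.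
by apply: ereal_sup_ubound; exists r => //=; rewrite in_itv /= r0 rd.
Qed.

Lemma limsup0_le2 (R : realType) (f : R -> R) (c : R) :
  (forall e : R, 0 < e ->
  exists2 d : R, 0 < d & forall r, 0 < r -> r < d -> f r <= c + e) ->
  (limsup0 f <= c%:E)%E.
Proof.
move=> H; apply/lee_addgt0Pr => e e0.
have [d d0 Hd] := H e e0.
apply: (@le_trans _ _ (ereal_sup [set (f r)%:E | r in `]0%R, d[])).
  by apply: ereal_inf_lbound; exists d => //=; rewrite in_itv /= d0.
apply: ge_ereal_sup => _ [r /= + <-]; rewrite in_itv /= => /andP[r0 rd].
by rewrite -EFinD lee_fin; apply: Hd.
Qed.

From mathcomp Require Import lra.
Lemma keyK (R : realType) (m s e lam r : R) : 0 < r -> r < 1 -> 0 < lam ->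
  powR r lam * powR m s <= expR e -> expR e <= powR r (- lam) * powR m s ->
  e / ln r <= s * ln m / ln r + lam /\ s * ln m / ln r <= e / ln r + lam.
Proof.
move=> r0 r1 l0 H1 H2.
have P0 : 0 < powR m s.
  rewrite lt_def powR_ge0 andbT; apply/negP => /eqP P0.
  by move: H2; rewrite P0 mulr0 leNgt expR_gt0.
have rl0 : 0 < powR r lam by apply: powR_gt0.
have rl1 : 0 < powR r (- lam) by apply: powR_gt0.
have A1 : lam * ln r + s * ln m <= e.
  rewrite -(ln_powR m s) -(ln_powR r lam) -lnM ?posrE //.
  by rewrite -[e in _ <= e]expRK ler_ln ?posrE ?expR_gt0 ?mulr_gt0.
have A2 : e <= - lam * ln r + s * ln m.
  rewrite -(ln_powR m s) -(ln_powR r (- lam)) -lnM ?posrE //.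
  by rewrite -[e in e <= _]expRK ler_ln ?posrE ?expR_gt0 ?mulr_gt0.
have lr : ln r < 0 by apply: ln_lt0; rewrite r0 r1.
set l := ln r in A1 A2 lr *; set k := ln m in A1 A2 *.
have il : l^-1 < 0 by rewrite invr_lt0.
have lil : l * l^-1 = 1 by rewrite mulfV // lt_eqF.
split; nra.
Qed.

Arguments limsup0_le1 {R f c}.
Arguments limsup0_le2 {R f c}.
Arguments keyK {R m s e lam r}.

Theorem proposition3 (R : realType) (L : set (seq bool)) (p0 p1 : R)
  (mu : {measure set (borelX R) -> \bar R})
  (chi : X -> R -> R * R) (a : R) (alpha : R * R) :
  0 < p0 -> p0 <= p1 -> p0 + p1 = 1 ->
  is_mu L p0 p1 mu ->
  (forall (q : R * R) (lam : R), 0 < lam ->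
     exists2 r0 : R, 0 < r0 &
       forall (x : X) (r : R), 0 < r -> r <= 1 -> r < r0 ->
         ((powR r lam * powR (fine (mu (ball_d x r))) (q.1 + q.2)
           <= expR (pairing q (chi x r)))%R
         /\ (expR (pairing q (chi x r))
           <= powR r (- lam) * powR (fine (mu (ball_d x r))) (q.1 + q.2))%R)) ->
  0 < a ->
  (forall q : R * R, pairing q alpha = a * (q.1 + q.2)) ->
  [set x : X | forall q : R * R, 0 <= q.1 + q.2 ->
     (limsup0 (fun r => (pairing q (chi x r) / ln r)%R) <= (pairing q alpha)%:E)%E]
  = [set x : X |
     (limsup0 (fun r => (ln (fine (mu (ball_d x r))) / ln r)%R) <= a%:E)%E].
Proof.
move=> _ _ _ _ Hchi a0 Halpha.
apply/seteqP; split => x /= Hx.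
- apply: limsup0_le2 => e e0.
  have e20 : 0 < e / 2 by rewrite divr_gt0.
  have H1 : 0 <= ((1, 0) : R * R).1 + ((1, 0) : R * R).2 by rewrite /= addr0.
  have [d d0 Hd] := limsup0_le1 (Hx _ H1) _ e20.
  have [r0 r00 Hr0] := Hchi ((1, 0) : R * R) (e / 2) e20.
  exists (Num.min d (Num.min r0 1)); first by rewrite !lt_min d0 r00 ltr01.
  move=> r rp; rewrite !lt_min => /and3P[rd rr0 r1].
  have [h1 h2] := Hr0 x r rp (ltW r1) rr0.
  have [k1 k2] := keyK rp r1 e20 h1 h2.
  have := Hd r rp rd; rewrite Halpha /= addr0 mulr1 in k2 * => hd.
  rewrite mul1r in k2; lra.
- move=> q hs; rewrite Halpha; apply: limsup0_le2 => e e0.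
  set s := q.1 + q.2 in hs *.
  have e20 : 0 < e / 2 by rewrite divr_gt0.
  set e' := e / (2 * (s + 1)).
  have e'0 : 0 < e' by rewrite /e' divr_gt0 // mulr_gt0 // ltr_wpDl.
  have e'e : e' * (2 * (s + 1)) = e.
    by rewrite /e' divfK // mulf_neq0 // gt_eqF // ltr_wpDl.
  have se : s * e' <= e / 2 by nra.
  have [d d0 Hd] := limsup0_le1 Hx _ e'0.
  have [r0 r00 Hr0] := Hchi q (e / 2) e20.
  exists (Num.min d (Num.min r0 1)); first by rewrite !lt_min d0 r00 ltr01.
  move=> r rp; rewrite !lt_min => /and3P[rd rr0 r1].
  have [h1 h2] := Hr0 x r rp (ltW r1) rr0.
  have [k1 k2] := keyK rp r1 e20 h1 h2.
  have /= hd := Hd r rp rd.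
  rewrite -mulrA in k1.
  have : s * (ln (fine (mu (ball_d x r))) / ln r) <= s * (a + e').
    by rewrite ler_wpM2l.
  rewrite /= -/s in k1 *; nra.
Qed.
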